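(* Let $G=\langle x,y\mid x^2y^3=1\rangle$ and $C=\langle a,b\mid (ab^{-3})^2b^6=1\rangle$. Then $x\mapsto ab^{-3}$, $y\mapsto b^2$ defines an embedding $G\hookrightarrow C$; $C$ is isomorphic, via $a\mapsto a_0$, $b\mapsto b$, to $G_1=\langle a_0,a_{-1},a_{-2},b\mid a_0b=ba_{-1},\ a_{-1}b=ba_{-2},\ a_{-2}b=ba_0^{-1}\rangle$; and every element of $G_1$ has a unique representation $b^na_{i_1}^{\varepsilon_1}\cdots a_{i_m}^{\varepsilon_m}$ with $n\in\mathbb Z$, $m\ge0$, $-2\le i_j\le 0$, $\varepsilon_j=\pm1$, and no consecutive pair $a_i^{\varepsilon}a_i^{-\varepsilon}$. *)

(* Defs.v *)
From Stdlib Require Import List ZArith Relations.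
Import ListNotations.
Set Implicit Arguments.

(* A letter is a generator together with an exponent flag:
   (g, false) = g, (g, true) = g^-1. *)
Definition letter (A : Type) := (A * bool)%type.
Definition word (A : Type) := list (letter A).

Definition inv_letter {A} (l : letter A) : letter A := (fst l, negb (snd l)).
Definition inv_word {A} (w : word A) : word A := rev (map inv_letter w).

Inductive pstep {A} (R : list (word A)) : word A -> word A -> Prop :=
| pstep_free : forall (u v : word A) (l : letter A), pstep R (u ++ l :: inv_letter l :: v) (u ++ v)
| pstep_rel : forall (u v r : word A), In r R -> pstep R (u ++ r ++ v) (u ++ v).

(* Equality in the group < A | R > : the equivalence generated by pstep
   (a congruence, since moves are allowed in any context). *)
Definition pres_eq {A} (R : list (word A)) : word A -> word A -> Prop :=
  clos_refl_sym_trans (word A) (pstep R).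

Definition subst {A B} (f : A -> word B) (w : word A) : word B :=
  concat (map (fun l : letter A => if snd l then inv_word (f (fst l)) else f (fst l)) w).

Definition hom_wd {A B} (RA : list (word A)) (RB : list (word B)) (f : A -> word B) :=
  forall u v, pres_eq RA u v -> pres_eq RB (subst f u) (subst f v).

Definition hom_inj {A B} (RA : list (word A)) (RB : list (word B)) (f : A -> word B) :=
  forall u v, pres_eq RB (subst f u) (subst f v) -> pres_eq RA u v.

Definition hom_surj {A B} (RA : list (word A)) (RB : list (word B)) (f : A -> word B) :=
  forall w, exists u, pres_eq RB w (subst f u).

Inductive Ggen := gx | gy.
Definition RG : list (word Ggen) :=
  [[(gx,false); (gx,false); (gy,false); (gy,false); (gy,false)]].

Inductive Cgen := ca | cb.
Definition RC : list (word Cgen) :=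
  [[(ca,false); (cb,true); (cb,true); (cb,true);
    (ca,false); (cb,true); (cb,true); (cb,true);
    (cb,false); (cb,false); (cb,false); (cb,false); (cb,false); (cb,false)]].

(* G1 = < a_0, a_{-1}, a_{-2}, b | a_0 b = b a_{-1}, a_{-1} b = b a_{-2},
          a_{-2} b = b a_0^-1 >, relators written as  lhs * rhs^-1. *)
Inductive Aidx := i0 | im1 | im2.   (* indices 0, -1, -2 *)
Inductive G1gen := ga (i : Aidx) | gb.
Definition RG1 : list (word G1gen) :=
  [ [(ga i0,false); (gb,false); (ga im1,true); (gb,true)];
    [(ga im1,false); (gb,false); (ga im2,true); (gb,true)];
    [(ga im2,false); (gb,false); (ga i0,false); (gb,true)] ].

Definition phiGC (g : Ggen) : word Cgen :=
  match g with
  | gx => [(ca,false); (cb,true); (cb,true); (cb,true)]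
  | gy => [(cb,false); (cb,false)]
  end.

Definition psiCG1 (g : Cgen) : word G1gen :=
  match g with
  | ca => [(ga i0,false)]
  | cb => [(gb,false)]
  end.

Definition bpow (n : Z) : word G1gen :=
  if (0 <=? n)%Z then repeat (gb,false) (Z.to_nat n)
  else repeat (gb,true) (Z.to_nat (- n)).

Definition aword (s : word Aidx) : word G1gen :=
  map (fun l => (ga (fst l), snd l)) s.

Definition reduced {A} (s : word A) : Prop :=
  forall u v l l', s = u ++ l :: l' :: v -> l' <> inv_letter l.

Definition normal_form (n : Z) (s : word Aidx) : word G1gen := bpow n ++ aword s.

(* Main.v *)
Require Import Defs.
From Stdlib Require Import List ZArith Relations Lia.
Import ListNotations.

Section Tool.
Variable A : Type.
Variable R : list (word A).
Notation pe := (pres_eq R).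

Lemma pe_refl u : pe u u. Proof. apply rst_refl. Qed.
Lemma pe_sym u v : pe u v -> pe v u. Proof. apply rst_sym. Qed.
Lemma pe_trans u v w : pe u v -> pe v w -> pe u w. Proof. apply rst_trans. Qed.

Lemma pstep_ctx p s x y : pstep R x y -> pstep R (p ++ x ++ s) (p ++ y ++ s).
Proof.
  intros H; destruct H.
  - replace (p ++ (u ++ l :: inv_letter l :: v) ++ s) with ((p ++ u) ++ l :: inv_letter l :: (v ++ s))
      by (rewrite <- !app_assoc; reflexivity).
    replace (p ++ (u ++ v) ++ s) with ((p ++ u) ++ (v ++ s)) by (rewrite <- !app_assoc; reflexivity).
    constructor.
  - replace (p ++ (u ++ r ++ v) ++ s) with ((p ++ u) ++ r ++ (v ++ s))
      by (rewrite <- !app_assoc; reflexivity).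
    replace (p ++ (u ++ v) ++ s) with ((p ++ u) ++ (v ++ s)) by (rewrite <- !app_assoc; reflexivity).
    constructor; auto.
Qed.

Lemma pe_ctx p s x y : pe x y -> pe (p ++ x ++ s) (p ++ y ++ s).
Proof.
  induction 1.
  - apply rst_step, pstep_ctx; auto.
  - apply pe_refl.
  - apply pe_sym; auto.
  - eapply pe_trans; eauto.
Qed.

Lemma pe_app u u' v v' : pe u u' -> pe v v' -> pe (u ++ v) (u' ++ v').
Proof.
  intros H1 H2. apply pe_trans with (u' ++ v).
  - pose proof (pe_ctx [] v u u' H1) as H. simpl in H. exact H.
  - pose proof (pe_ctx u' [] v v' H2) as H. rewrite !app_nil_r in H. exact H.
Qed.

Lemma pe_cons l u v : pe u v -> pe (l :: u) (l :: v).
Proof. intros; apply (pe_app [l] [l]); auto using pe_refl. Qed.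

Lemma pe_free u v l : pe (u ++ l :: inv_letter l :: v) (u ++ v).
Proof. apply rst_step; constructor. Qed.

Lemma pe_rel u v r : In r R -> pe (u ++ r ++ v) (u ++ v).
Proof. intros; apply rst_step; constructor; auto. Qed.

Lemma inv_letter_inv (l : letter A) : inv_letter (inv_letter l) = l.
Proof. destruct l; unfold inv_letter; simpl; rewrite Bool.negb_involutive; auto. Qed.

Lemma inv_word_app (u v : word A) : inv_word (u ++ v) = inv_word v ++ inv_word u.
Proof. unfold inv_word; rewrite map_app, rev_app_distr; auto. Qed.

Lemma inv_word_inv (w : word A) : inv_word (inv_word w) = w.
Proof.
  unfold inv_word; rewrite map_rev, rev_involutive, map_map.
  erewrite map_ext; [apply map_id|]. intros; apply inv_letter_inv.
Qed.

Lemma inv_word_cons (l : letter A) w : inv_word (l :: w) = inv_word w ++ [inv_letter l].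
Proof. reflexivity. Qed.

Lemma pe_cancel w : pe (w ++ inv_word w) [].
Proof.
  induction w as [|a w IH]; simpl. apply pe_refl.
  rewrite inv_word_cons, app_assoc.
  apply pe_trans with (a :: [] ++ [inv_letter a]).
  - apply pe_cons. apply (pe_app _ [] [inv_letter a]); auto using pe_refl.
  - apply (pe_free [] []).
Qed.

Lemma pe_cancel' w : pe (inv_word w ++ w) [].
Proof. pose proof (pe_cancel (inv_word w)) as H; rewrite inv_word_inv in H; exact H. Qed.

Lemma pe_invrel u v r : In r R -> pe (u ++ inv_word r ++ v) (u ++ v).
Proof.
  intros Hr. apply pe_trans with (u ++ inv_word r ++ r ++ v).
  - apply pe_sym.
    apply pe_app. apply pe_refl.
    pose proof (pe_rel (inv_word r) v r Hr); auto.
  - rewrite (app_assoc (inv_word r)).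
    pose proof (pe_ctx u v _ _ (pe_cancel' r)) as H. simpl in H. exact H.
Qed.

Lemma pe_inv u v : pe u v -> pe (inv_word u) (inv_word v).
Proof.
  induction 1.
  - destruct H.
    + rewrite !inv_word_app. 
      replace (inv_word (l :: inv_letter l :: v)) with (inv_word v ++ inv_letter (inv_letter l) :: inv_letter l :: [])
        by (unfold inv_word; simpl; rewrite <- app_assoc; reflexivity).
      rewrite inv_letter_inv. rewrite <- app_assoc. simpl.
      set (m := inv_letter l).
      replace l with (inv_letter m) by (unfold m; apply inv_letter_inv).
      pose proof (pe_free (inv_word v) (inv_word u) (inv_letter m)) as H.
      rewrite inv_letter_inv in H; exact H.
    + rewrite !inv_word_app. rewrite <- app_assoc. apply pe_invrel; auto.
  - apply pe_refl.
  - apply pe_sym; auto.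
  - eapply pe_trans; eauto.
Qed.

Lemma swap_back x y c : pe [x; c] [c; y] -> pe [y; inv_letter c] [inv_letter c; x].
Proof.
  intros H. eapply pe_trans. apply pe_sym.
  pose proof (pe_free [] [y; inv_letter c] (inv_letter c)) as H1; rewrite inv_letter_inv in H1; exact H1.
  simpl. eapply pe_trans. apply (pe_ctx [inv_letter c] [inv_letter c] [c;y] [x;c]); apply pe_sym; auto.
  simpl. apply (pe_free [inv_letter c; x] [] c).
Qed.

Variable eqb : letter A -> letter A -> bool.
Hypothesis eqb_ok : forall x y, eqb x y = true -> x = y.

Definition crd (l : letter A) (w : word A) : word A :=
  match w with l' :: t => if eqb l' (inv_letter l) then t else l :: w | [] => [l] end.
Definition frd (w : word A) : word A := fold_right crd [] w.

Lemma pe_crd l w : pe (l :: w) (crd l w).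
Proof.
  destruct w as [|l' t]; simpl. apply pe_refl.
  destruct (eqb l' (inv_letter l)) eqn:E. apply eqb_ok in E; subst. apply (pe_free [] t).
  apply pe_refl.
Qed.

Lemma pe_frd w : pe w (frd w).
Proof.
  induction w; simpl. apply pe_refl.
  eapply pe_trans. apply pe_cons; eauto. apply pe_crd.
Qed.

Lemma pe_by_fr u v : frd u = frd v -> pe u v.
Proof. intros H. eapply pe_trans. apply pe_frd. rewrite H. apply pe_sym, pe_frd. Qed.

Lemma pe_by_rel r p s u v : In r R -> frd (p ++ r ++ s) = frd u -> frd (p ++ s) = frd v -> pe u v.
Proof.
  intros Hr H1 H2. apply pe_trans with (p ++ r ++ s).
  apply pe_by_fr; auto. eapply pe_trans. apply pe_rel; auto. apply pe_by_fr; auto.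
Qed.

Lemma pe_by_invrel r p s u v : In r R -> frd (p ++ inv_word r ++ s) = frd u -> frd (p ++ s) = frd v -> pe u v.
Proof.
  intros Hr H1 H2. apply pe_trans with (p ++ inv_word r ++ s).
  apply pe_by_fr; auto. eapply pe_trans. apply pe_invrel; auto. apply pe_by_fr; auto.
Qed.

End Tool.
Import ListNotations.

Lemma subst_app {A B} (f : A -> word B) u v : subst f (u ++ v) = subst f u ++ subst f v.
Proof. unfold subst; rewrite map_app, concat_app; auto. Qed.

Lemma subst_cons {A B} (f : A -> word B) l u : subst f (l :: u) = subst f [l] ++ subst f u.
Proof. apply (subst_app f [l] u). Qed.

Lemma subst_pair {A B} (f : A -> word B) l RB :
  pres_eq RB (subst f [l; inv_letter l]) [].
Proof.
  destruct l as [g []]; unfold subst; simpl; rewrite app_nil_r.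
  apply pe_cancel'. apply pe_cancel.
Qed.

Lemma hom_wd_crit {A B} (RA : list (word A)) (RB : list (word B)) f :
  (forall r, In r RA -> pres_eq RB (subst f r) []) -> hom_wd RA RB f.
Proof.
  intros Hr u v H; induction H.
  - destruct H.
    + replace (u ++ l :: inv_letter l :: v) with (u ++ [l; inv_letter l] ++ v) by reflexivity.
      rewrite !subst_app. pose proof (pe_ctx _ RB (subst f u) (subst f v) _ _ (subst_pair f l RB)).
      simpl in H; exact H.
    + rewrite !subst_app. pose proof (pe_ctx _ RB (subst f u) (subst f v) _ _ (Hr r H)).
      simpl in H0; exact H0.
  - apply pe_refl.
  - apply pe_sym; auto.
  - eapply pe_trans; eauto.
Qed.

Lemma subst_gen_eq {A B} (RB : list (word B)) (f g : A -> word B) w :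
  (forall x, pres_eq RB (f x) (g x)) -> pres_eq RB (subst f w) (subst g w).
Proof.
  intros H; induction w as [|[x e] w IH]. apply pe_refl.
  rewrite (subst_cons f), (subst_cons g). apply pe_app; auto.
  unfold subst; simpl; rewrite !app_nil_r. destruct e; auto. apply pe_inv; auto.
Qed.
Import ListNotations.
Open Scope Z_scope.

Definition Aeqb (i j : Aidx) : bool :=
  match i, j with i0,i0 | im1,im1 | im2,im2 => true | _,_ => false end.
Definition aeqb (x y : letter Aidx) : bool := Aeqb (fst x) (fst y) && Bool.eqb (snd x) (snd y).
Lemma aeqb_ok x y : aeqb x y = true <-> x = y.
Proof.
  destruct x as [[] []], y as [[] []]; simpl; split; intro H; try discriminate; try reflexivity.
Qed.
Lemma aeqb_refl x : aeqb x x = true. Proof. apply aeqb_ok; auto. Qed.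
Lemma aeqb_true x y : aeqb x y = true -> x = y. Proof. apply aeqb_ok. Qed.

Definition sig (c : letter Aidx) : letter Aidx :=
  match c with (i0,e) => (im1,e) | (im1,e) => (im2,e) | (im2,e) => (i0, negb e) end.
Definition siginv (c : letter Aidx) : letter Aidx :=
  match c with (im1,e) => (i0,e) | (im2,e) => (im1,e) | (i0,e) => (im2, negb e) end.
Lemma sig_siginv c : sig (siginv c) = c. Proof. destruct c as [[] []]; reflexivity. Qed.
Lemma siginv_sig c : siginv (sig c) = c. Proof. destruct c as [[] []]; reflexivity. Qed.
Lemma sig_inv c : sig (inv_letter c) = inv_letter (sig c). Proof. destruct c as [[] []]; reflexivity. Qed.
Lemma sig6 c : Nat.iter 6 sig c = c. Proof. destruct c as [[] []]; reflexivity. Qed.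
Lemma sig3 c : Nat.iter 3 sig c = inv_letter c. Proof. destruct c as [[] []]; reflexivity. Qed.

Definition spow (n : Z) (c : letter Aidx) : letter Aidx := Nat.iter (Z.to_nat (n mod 6)) sig c.

Lemma iter_comm {X} (f g : X -> X) (H : forall x, f (g x) = g (f x)) m x :
  Nat.iter m f (g x) = g (Nat.iter m f x).
Proof. induction m; simpl; auto. rewrite IHm; auto. Qed.

Lemma mod6_cases n : n mod 6 = 0 \/ n mod 6 = 1 \/ n mod 6 = 2 \/ n mod 6 = 3 \/ n mod 6 = 4 \/ n mod 6 = 5.
Proof. pose proof (Z.mod_pos_bound n 6). lia. Qed.

Lemma spow_succ n c : spow (n+1) c = sig (spow n c).
Proof.
  unfold spow. rewrite Z.add_mod by lia.
  destruct (mod6_cases n) as [H|[H|[H|[H|[H|H]]]]]; rewrite H; simpl; auto.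
  symmetry; apply (sig6 c).
Qed.
Lemma spow0 c : spow 0 c = c. Proof. reflexivity. Qed.
Lemma spow_pred n c : spow (n-1) c = siginv (spow n c).
Proof. replace n with ((n-1)+1) at 2 by lia. rewrite spow_succ, siginv_sig; auto. Qed.
Lemma spow_nat m c : spow (Z.of_nat m) c = Nat.iter m sig c.
Proof. induction m. reflexivity. rewrite Nat2Z.inj_succ, <- Z.add_1_r, spow_succ, IHm; reflexivity. Qed.
Lemma spow_negnat m c : spow (- Z.of_nat m) c = Nat.iter m siginv c.
Proof.
  induction m. reflexivity.
  replace (- Z.of_nat (S m)) with (- Z.of_nat m - 1) by lia. rewrite spow_pred, IHm; reflexivity.
Qed.
Lemma spow_addnat n m c : spow (n + Z.of_nat m) c = Nat.iter m sig (spow n c).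
Proof.
  induction m. rewrite Z.add_0_r; reflexivity.
  replace (n + Z.of_nat (S m)) with (n + Z.of_nat m + 1) by lia. rewrite spow_succ, IHm; reflexivity.
Qed.
Lemma spow_sig n c : spow n (sig c) = sig (spow n c).
Proof. unfold spow; apply iter_comm; auto. Qed.
Lemma spow_inv n c : spow n (inv_letter c) = inv_letter (spow n c).
Proof. unfold spow; apply iter_comm; intros; apply sig_inv. Qed.
Lemma inv_spow3 m c : inv_letter (spow (m-3) c) = spow m c.
Proof.
  replace m with ((m-3) + Z.of_nat 3) at 2 by lia. rewrite spow_addnat, sig3; auto.
Qed.
Lemma spow_eq_mod n n' c : spow n c = spow n' c -> n mod 6 = n' mod 6.
Proof.
  unfold spow; intros H.
  destruct (mod6_cases n) as [E|[E|[E|[E|[E|E]]]]]; rewrite E in *;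
  destruct (mod6_cases n') as [E'|[E'|[E'|[E'|[E'|E']]]]]; rewrite E' in *; auto;
  destruct c as [[] []]; simpl in H; discriminate.
Qed.

Definition cr := crd Aidx aeqb.

Fixpoint redb (w : word Aidx) : bool :=
  match w with
  | l :: ((l' :: _) as t) => negb (aeqb l' (inv_letter l)) && redb t
  | _ => true
  end.

Lemma redb_tail l w : redb (l :: w) = true -> redb w = true.
Proof. destruct w; simpl; auto. intros H; apply andb_prop in H; tauto. Qed.

Lemma cr_red l w : redb w = true -> redb (cr l w) = true.
Proof.
  intros H; destruct w as [|l' t]; simpl; auto.
  destruct (aeqb l' (inv_letter l)) eqn:E. eapply redb_tail; eauto.
  simpl. rewrite E; simpl; auto.
Qed.

Lemma cr_cons l w : redb (l :: w) = true -> cr l w = l :: w.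
Proof.
  destruct w as [|l' t]; simpl; auto. intros H; apply andb_prop in H as [H _].
  destruct (aeqb l' (inv_letter l)); simpl in H; auto; discriminate.
Qed.

Lemma cr_cancel l w : redb w = true -> cr l (cr (inv_letter l) w) = w.
Proof.
  intros H; destruct w as [|l' t]; simpl.
  - rewrite aeqb_refl; auto.
  - destruct (aeqb l' (inv_letter (inv_letter l))) eqn:E.
    + apply aeqb_true in E. rewrite inv_letter_inv in E. subst l'.
      destruct t as [|l'' t]; simpl; auto. simpl in H. apply andb_prop in H as [H1 _].
      destruct (aeqb l'' (inv_letter l)); simpl in *; auto; discriminate.
    + simpl. replace (aeqb (inv_letter l) (inv_letter l)) with true by (symmetry; apply aeqb_ok; auto).
      auto.
Qed.

Lemma cr_cancel' l w : redb w = true -> cr (inv_letter l) (cr l w) = w.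
Proof. intros H. pose proof (cr_cancel (inv_letter l) w H). rewrite inv_letter_inv in H0. auto. Qed.

Lemma reduced_redb s : reduced s <-> redb s = true.
Proof.
  split.
  - induction s as [|l s IH]; intros H; simpl; auto.
    destruct s as [|l' t]; auto.
    apply andb_true_intro; split.
    + destruct (aeqb l' (inv_letter l)) eqn:E; auto. apply aeqb_true in E.
      exfalso. exact (H [] t l l' eq_refl E).
    + apply IH. intros u v x y Hs. apply (H (l :: u) v x y). rewrite Hs; reflexivity.
  - intros H u. revert s H. induction u as [|a u IH]; intros s H v l l' Hs; simpl in Hs; subst s.
    + simpl in H. apply andb_prop in H as [H _]. intro E; subst.
      replace (aeqb (inv_letter l) (inv_letter l)) with true in H by (symmetry; apply aeqb_ok; auto).
      simpl in H; discriminate.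
    + exact (IH _ (redb_tail _ _ H) v l l' eq_refl).
Qed.

Definition St := (Z * word Aidx)%type.
Definition act1 (l : letter G1gen) (m : St) : St :=
  let (n, w) := m in
  match l with
  | (gb, false) => (n + 1, w)
  | (gb, true) => (n - 1, w)
  | (ga i, e) => (n, cr (spow n (i, e)) w)
  end.
Definition actw (u : word G1gen) (m : St) : St := fold_right act1 m u.
Definition eval1 (u : word G1gen) : St := actw u (0, []).
Lemma eval1_app u v : eval1 (u ++ v) = actw u (eval1 v).
Proof. unfold eval1, actw; rewrite fold_right_app; auto. Qed.

Definition okSt (m : St) := redb (snd m) = true.
Lemma act1_ok l m : okSt m -> okSt (act1 l m).
Proof. destruct m as [n w], l as [[i|] []]; unfold okSt; simpl; auto; apply cr_red. Qed.
Lemma actw_ok u m : okSt m -> okSt (actw u m).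
Proof. induction u; simpl; auto. intros; apply act1_ok; auto. Qed.
Lemma eval1_ok u : okSt (eval1 u).
Proof. apply actw_ok. reflexivity. Qed.

Lemma act1_cancel l m : okSt m -> act1 l (act1 (inv_letter l) m) = m.
Proof.
  destruct m as [n w], l as [[i|] []]; unfold okSt; simpl; intros H.
  - change (i, false) with (inv_letter (i, true)). rewrite spow_inv, cr_cancel; auto.
  - change (i, true) with (inv_letter (i, false)). rewrite spow_inv, cr_cancel; auto.
  - f_equal; lia.
  - f_equal; lia.
Qed.

Lemma spow_m1_sig n c : spow (n-1) (sig c) = spow n c.
Proof. rewrite spow_sig. replace n with (n-1+1) at 2 by lia. rewrite spow_succ; auto. Qed.

Lemma actw_rel r m : In r RG1 -> okSt m -> actw r m = m.
Proof.
  destruct m as [n w]; unfold okSt; simpl; intros Hr H.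
  destruct Hr as [<-|[<-|[<-|[]]]]; simpl; replace (n - 1 + 1) with n by lia; f_equal.
  - change (im1, true) with (sig (inv_letter (i0, false))). rewrite spow_m1_sig, spow_inv, cr_cancel; auto.
  - change (im2, true) with (sig (inv_letter (im1, false))). rewrite spow_m1_sig, spow_inv, cr_cancel; auto.
  - change (i0, false) with (sig (inv_letter (im2, false))). rewrite spow_m1_sig, spow_inv, cr_cancel; auto.
Qed.

Lemma eval1_pe u v : pres_eq RG1 u v -> eval1 u = eval1 v.
Proof.
  induction 1; auto.
  - destruct H.
    + rewrite !eval1_app. f_equal. simpl. apply act1_cancel. apply eval1_ok.
    + rewrite !eval1_app. f_equal. apply actw_rel; auto. apply eval1_ok.
  - congruence.
Qed.
Import ListNotations.
Open Scope Z_scope.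

Definition crep {A} (p : word A) (m : nat) : word A := concat (repeat p m).
Lemma crep_S {A} (p : word A) m : crep p (S m) = p ++ crep p m. Proof. reflexivity. Qed.
Lemma crep_comm {A} (p : word A) m : crep p m ++ p = p ++ crep p m.
Proof. induction m; simpl. rewrite app_nil_r; auto. unfold crep in *; simpl. rewrite <- app_assoc, IHm; auto. Qed.

Definition gpow {A} (p q : word A) (n : Z) : word A :=
  if 0 <=? n then crep p (Z.to_nat n) else crep q (Z.to_nat (- n)).
Lemma gpow_pos {A} (p q : word A) m : gpow p q (Z.of_nat m) = crep p m.
Proof. unfold gpow. replace (0 <=? Z.of_nat m) with true by (symmetry; apply Z.leb_le; lia). rewrite Nat2Z.id; auto. Qed.
Lemma gpow_neg {A} (p q : word A) m : gpow p q (- Z.of_nat m) = crep q m.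
Proof.
  destruct m. reflexivity. unfold gpow.
  replace (0 <=? - Z.of_nat (S m)) with false by (symmetry; apply Z.leb_gt; lia).
  rewrite Z.opp_involutive, Nat2Z.id; auto.
Qed.
Lemma Zcases n : exists m, n = Z.of_nat m \/ n = - Z.of_nat (S m).
Proof.
  destruct (Z_le_gt_dec 0 n). exists (Z.to_nat n); left; lia.
  exists (Z.to_nat (- n - 1)); right; lia.
Qed.

Section Gp.
Variable A : Type.
Variable R : list (word A).
Variables p q : word A.
Hypothesis Hpq : pres_eq R (p ++ q) [].
Hypothesis Hqp : pres_eq R (q ++ p) [].

Lemma pe_kill x y z : pres_eq R (x ++ y) [] -> pres_eq R (x ++ y ++ z) z.
Proof. intros H. rewrite app_assoc. apply (pe_app _ _ _ [] z z H (pe_refl _ _ _)). Qed.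
Lemma pe_kill' w x y : pres_eq R (x ++ y) [] -> pres_eq R (w ++ x ++ y) w.
Proof. intros H. pose proof (pe_app _ _ w w _ [] (pe_refl _ _ _) H). rewrite app_nil_r in H0; auto. Qed.

Lemma gpow_L1 n : pres_eq R (p ++ gpow p q n) (gpow p q (n+1)).
Proof.
  destruct (Zcases n) as [m [-> | ->]].
  - replace (Z.of_nat m + 1) with (Z.of_nat (S m)) by lia. rewrite !gpow_pos. apply pe_refl.
  - replace (- Z.of_nat (S m) + 1) with (- Z.of_nat m) by lia. rewrite !gpow_neg, crep_S.
    apply pe_kill; auto.
Qed.
Lemma gpow_L2 n : pres_eq R (gpow p q n ++ p) (gpow p q (n+1)).
Proof.
  destruct (Zcases n) as [m [-> | ->]].
  - replace (Z.of_nat m + 1) with (Z.of_nat (S m)) by lia. rewrite !gpow_pos, crep_comm. apply pe_refl.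
  - replace (- Z.of_nat (S m) + 1) with (- Z.of_nat m) by lia. rewrite !gpow_neg, crep_S, <- crep_comm.
    rewrite <- app_assoc. apply pe_kill'; auto.
Qed.
Lemma gpow_L3 n : pres_eq R (q ++ gpow p q n) (gpow p q (n-1)).
Proof.
  destruct (Zcases n) as [[|m] [-> | ->]].
  - replace (Z.of_nat 0 - 1) with (- Z.of_nat 1) by lia. rewrite gpow_pos, gpow_neg. unfold crep; simpl; rewrite ?app_nil_r; apply pe_refl.
  - replace (- Z.of_nat 1 - 1) with (- Z.of_nat 2) by lia. rewrite !gpow_neg. apply pe_refl.
  - replace (Z.of_nat (S m) - 1) with (Z.of_nat m) by lia. rewrite !gpow_pos, crep_S. apply pe_kill; auto.
  - replace (- Z.of_nat (S (S m)) - 1) with (- Z.of_nat (S (S (S m)))) by lia. rewrite !gpow_neg. apply pe_refl.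
Qed.
Lemma gpow_L4 n : pres_eq R (gpow p q n ++ q) (gpow p q (n-1)).
Proof.
  destruct (Zcases n) as [[|m] [-> | ->]].
  - replace (Z.of_nat 0 - 1) with (- Z.of_nat 1) by lia. rewrite gpow_pos, gpow_neg. unfold crep; simpl; rewrite ?app_nil_r; apply pe_refl.
  - replace (- Z.of_nat 1 - 1) with (- Z.of_nat 2) by lia. rewrite !gpow_neg, crep_comm. apply pe_refl.
  - replace (Z.of_nat (S m) - 1) with (Z.of_nat m) by lia. rewrite !gpow_pos, crep_S, <- crep_comm.
    rewrite <- app_assoc. apply pe_kill'; auto.
  - replace (- Z.of_nat (S (S m)) - 1) with (- Z.of_nat (S (S (S m)))) by lia. rewrite !gpow_neg.
    rewrite (crep_S q (S (S m))), crep_comm. apply pe_refl.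
Qed.
End Gp.
Import ListNotations.
Open Scope Z_scope.

Definition g1eqb (x y : letter G1gen) : bool :=
  match fst x, fst y with
  | ga i, ga j => Aeqb i j | gb, gb => true | _, _ => false end && Bool.eqb (snd x) (snd y).
Lemma g1eqb_ok x y : g1eqb x y = true -> x = y.
Proof. destruct x as [[[]|] []], y as [[[]|] []]; simpl; intros H; try discriminate; reflexivity. Qed.
Definition fr1 := frd G1gen g1eqb.

Definition bL : letter G1gen := (gb, false).
Definition bL' : letter G1gen := (gb, true).
Definition Al (c : letter Aidx) : letter G1gen := (ga (fst c), snd c).

Lemma pe1_fr u v : fr1 u = fr1 v -> pres_eq RG1 u v.
Proof. apply pe_by_fr, g1eqb_ok. Qed.

Lemma swap1 c : pres_eq RG1 [Al c; bL] [bL; Al (sig c)].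
Proof.
  destruct c as [[] []].
  - apply pe_sym. apply (pe_by_rel _ _ _ g1eqb_ok (nth 0 RG1 []) [Al (i0,true)] [bL]).
    simpl; tauto. all: reflexivity.
  - apply (pe_by_rel _ _ _ g1eqb_ok (nth 0 RG1 []) [] [bL; Al (im1,false)]). simpl; tauto. all: reflexivity.
  - apply pe_sym. apply (pe_by_rel _ _ _ g1eqb_ok (nth 1 RG1 []) [Al (im1,true)] [bL]).
    simpl; tauto. all: reflexivity.
  - apply (pe_by_rel _ _ _ g1eqb_ok (nth 1 RG1 []) [] [bL; Al (im2,false)]). simpl; tauto. all: reflexivity.
  - apply pe_sym. apply (pe_by_rel _ _ _ g1eqb_ok (nth 2 RG1 []) [Al (im2,true)] [bL]).
    simpl; tauto. all: reflexivity.
  - apply (pe_by_rel _ _ _ g1eqb_ok (nth 2 RG1 []) [] [bL; Al (i0,true)]). simpl; tauto. all: reflexivity.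
Qed.

Lemma swap1' c : pres_eq RG1 [Al c; bL'] [bL'; Al (siginv c)].
Proof.
  pose proof (swap1 (siginv c)) as H. rewrite sig_siginv in H.
  apply (swap_back _ _ _ _ bL H).
Qed.

Lemma iter_sig_S m c : Nat.iter m sig (sig c) = sig (Nat.iter m sig c).
Proof. apply iter_comm; auto. Qed.
Lemma iter_siginv_S m c : Nat.iter m siginv (siginv c) = siginv (Nat.iter m siginv c).
Proof. apply iter_comm; auto. Qed.

Lemma comm_pos m c : pres_eq RG1 (Al c :: repeat bL m) (repeat bL m ++ [Al (Nat.iter m sig c)]).
Proof.
  revert c; induction m; intros c; simpl. apply pe_refl.
  eapply pe_trans. apply (pe_app _ _ [Al c; bL] [bL; Al (sig c)] (repeat bL m)). apply swap1. apply pe_refl.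
  simpl. apply pe_cons. rewrite <- iter_sig_S. apply IHm.
Qed.
Lemma comm_neg m c : pres_eq RG1 (Al c :: repeat bL' m) (repeat bL' m ++ [Al (Nat.iter m siginv c)]).
Proof.
  revert c; induction m; intros c; simpl. apply pe_refl.
  eapply pe_trans. apply (pe_app _ _ [Al c; bL'] [bL'; Al (siginv c)] (repeat bL' m)). apply swap1'. apply pe_refl.
  simpl. apply pe_cons. rewrite <- iter_siginv_S. apply IHm.
Qed.

Lemma crep_single {A} (l : letter A) m : crep [l] m = repeat l m.
Proof. induction m; simpl; auto. rewrite <- IHm; reflexivity. Qed.
Lemma bpow_gpow n : bpow n = gpow [bL] [bL'] n.
Proof. unfold bpow, gpow. destruct (0 <=? n); rewrite crep_single; reflexivity. Qed.

Lemma comm_bpow n c : pres_eq RG1 (Al c :: bpow n) (bpow n ++ [Al (spow n c)]).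
Proof.
  rewrite bpow_gpow. destruct (Zcases n) as [m [-> | ->]].
  - rewrite gpow_pos, crep_single, spow_nat. apply comm_pos.
  - rewrite gpow_neg, crep_single, spow_negnat. apply comm_neg.
Qed.

Lemma bb' : pres_eq RG1 ([bL] ++ [bL']) []. Proof. apply (pe_free _ _ [] [] bL). Qed.
Lemma b'b : pres_eq RG1 ([bL'] ++ [bL]) []. Proof. apply (pe_free _ _ [] [] bL'). Qed.

Lemma aword_cr c w : pres_eq RG1 (Al c :: aword w) (aword (cr c w)).
Proof.
  destruct w as [|l t]; simpl. apply pe_refl.
  destruct (aeqb l (inv_letter c)) eqn:E. apply aeqb_true in E; subst.
  apply (pe_free _ _ [] (aword t) (Al c)). apply pe_refl.
Qed.

Definition nf1 (m : St) := normal_form (fst m) (snd m).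

Lemma nf1_step l m : pres_eq RG1 (l :: nf1 m) (nf1 (act1 l m)).
Proof.
  destruct m as [n w]. unfold nf1, normal_form; simpl.
  destruct l as [[i|] []]; simpl.
  - change ((ga i, true) :: bpow n ++ aword w) with ((Al (i,true) :: bpow n) ++ aword w).
    eapply pe_trans. apply pe_app. apply comm_bpow. apply pe_refl.
    rewrite <- app_assoc. apply pe_app. apply pe_refl. apply aword_cr.
  - change ((ga i, false) :: bpow n ++ aword w) with ((Al (i,false) :: bpow n) ++ aword w).
    eapply pe_trans. apply pe_app. apply comm_bpow. apply pe_refl.
    rewrite <- app_assoc. apply pe_app. apply pe_refl. apply aword_cr.
  - change ((gb, true) :: bpow n ++ aword w) with (([bL'] ++ bpow n) ++ aword w).
    apply pe_app. rewrite !bpow_gpow. apply gpow_L3; first [apply bb' | apply b'b]. apply pe_refl.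
  - change ((gb, false) :: bpow n ++ aword w) with (([bL] ++ bpow n) ++ aword w).
    apply pe_app. rewrite !bpow_gpow. apply gpow_L1; first [apply bb' | apply b'b]. apply pe_refl.
Qed.

Lemma pe1_nf u : pres_eq RG1 u (nf1 (eval1 u)).
Proof.
  induction u as [|l u IH]. apply pe_refl.
  eapply pe_trans. apply pe_cons, IH. apply nf1_step.
Qed.

Lemma pe1_dec u v : eval1 u = eval1 v -> pres_eq RG1 u v.
Proof.
  intros H. eapply pe_trans. apply pe1_nf. rewrite H. apply pe_sym, pe1_nf.
Qed.

Lemma eval_aword s : redb s = true -> eval1 (aword s) = (0, s).
Proof.
  induction s as [|c s IH]; intros H; auto.
  change (eval1 (aword (c :: s))) with (act1 (Al c) (eval1 (aword s))).
  rewrite IH by (eapply redb_tail; eauto).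
  destruct c as [i e]. simpl. rewrite spow0, cr_cons; auto.
Qed.

Lemma actw_bpos m k s : actw (repeat bL m) (k, s) = (k + Z.of_nat m, s).
Proof. induction m; simpl. f_equal; lia. rewrite IHm; simpl. f_equal; lia. Qed.
Lemma actw_bneg m k s : actw (repeat bL' m) (k, s) = (k - Z.of_nat m, s).
Proof. induction m; simpl. f_equal; lia. rewrite IHm; simpl. f_equal; lia. Qed.

Lemma eval_nf n s : redb s = true -> eval1 (normal_form n s) = (n, s).
Proof.
  intros H. unfold normal_form. rewrite eval1_app, eval_aword by auto.
  rewrite bpow_gpow. destruct (Zcases n) as [m [-> | ->]].
  - rewrite gpow_pos, crep_single, actw_bpos. f_equal; lia.
  - rewrite gpow_neg, crep_single, actw_bneg. f_equal; lia.
Qed.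
Import ListNotations.
Open Scope Z_scope.

Theorem G1_exist (w : word G1gen) : exists (n : Z) (s : word Aidx),
      reduced s /\ pres_eq RG1 w (normal_form n s).
Proof.
  exists (fst (eval1 w)), (snd (eval1 w)). split.
  apply reduced_redb, eval1_ok. apply pe1_nf.
Qed.

Theorem G1_unique (n n' : Z) (s s' : word Aidx) : reduced s -> reduced s' ->
      pres_eq RG1 (normal_form n s) (normal_form n' s') -> n = n' /\ s = s'.
Proof.
  intros H1 H2 H. apply eval1_pe in H. rewrite !eval_nf in H by (apply reduced_redb; auto).
  inversion H; auto.
Qed.

Definition ceqb (x y : letter Cgen) : bool :=
  match fst x, fst y with ca, ca | cb, cb => true | _, _ => false end && Bool.eqb (snd x) (snd y).
Lemma ceqb_ok x y : ceqb x y = true -> x = y.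
Proof. destruct x as [[] []], y as [[] []]; simpl; intros H; try discriminate; reflexivity. Qed.

Definition thG (g : G1gen) : word Cgen :=
  match g with
  | ga i0 => [(ca,false)]
  | ga im1 => [(cb,true); (ca,false); (cb,false)]
  | ga im2 => [(cb,true); (cb,true); (ca,false); (cb,false); (cb,false)]
  | gb => [(cb,false)]
  end.

Lemma psi_wd : hom_wd RC RG1 psiCG1.
Proof.
  apply hom_wd_crit. intros r [<-|[]]. apply pe1_dec. vm_compute. reflexivity.
Qed.

Lemma th_wd : hom_wd RG1 RC thG.
Proof.
  apply hom_wd_crit. intros r [<-|[<-|[<-|[]]]].
  - apply (pe_by_fr _ _ _ ceqb_ok). reflexivity.
  - apply (pe_by_fr _ _ _ ceqb_ok). reflexivity.
  - apply (pe_by_rel _ _ _ ceqb_ok (nth 0 RC [])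
      [(cb,true);(cb,true);(ca,false);(cb,false);(cb,false);(cb,false)]
      [(cb,true);(cb,true);(cb,true);(ca,true);(cb,false);(cb,false)]).
    simpl; tauto. all: reflexivity.
Qed.

Lemma th_psi u : subst thG (subst psiCG1 u) = u.
Proof.
  induction u as [|l u IH]; auto.
  rewrite (subst_cons psiCG1), subst_app, IH. destruct l as [[] []]; reflexivity.
Qed.

Lemma psi_inj : hom_inj RC RG1 psiCG1.
Proof.
  intros u v H. apply th_wd in H. rewrite !th_psi in H. exact H.
Qed.

Lemma psi_surj : hom_surj RC RG1 psiCG1.
Proof.
  intros w. exists (subst thG w).
  induction w as [|l w IH]. apply pe_refl.
  rewrite (subst_cons thG), subst_app.
  apply (pe_app _ _ [l]); auto.
  apply pe1_dec. destruct l as [[[]|] []]; vm_compute; reflexivity.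
Qed.

Lemma phi_wd : hom_wd RG RC phiGC.
Proof.
  apply hom_wd_crit. intros r [<-|[]].
  pose proof (pe_rel _ RC [] [] (nth 0 RC []) ltac:(simpl; tauto)). exact H.
Qed.
Import ListNotations.
Open Scope Z_scope.

Definition geqb (x y : letter Ggen) : bool :=
  match fst x, fst y with gx, gx | gy, gy => true | _, _ => false end && Bool.eqb (snd x) (snd y).
Lemma geqb_ok x y : geqb x y = true -> x = y.
Proof. destruct x as [[] []], y as [[] []]; simpl; intros H; try discriminate; reflexivity. Qed.

Definition xL : letter Ggen := (gx,false).
Definition xL' : letter Ggen := (gx,true).
Definition yL : letter Ggen := (gy,false).
Definition yL' : letter Ggen := (gy,true).

Lemma peG_fr u v : frd Ggen geqb u = frd Ggen geqb v -> pres_eq RG u v.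
Proof. apply pe_by_fr, geqb_ok. Qed.

Definition rG := nth 0 RG [].
Lemma rG_in : In rG RG. Proof. simpl; tauto. Qed.

Lemma Ga : pres_eq RG [xL;xL;yL] [yL';yL'].
Proof. apply (pe_by_rel _ _ _ geqb_ok rG [] [yL';yL'] _ _ rG_in); reflexivity. Qed.
Lemma Gb : pres_eq RG [yL';yL'] [yL;xL;xL].
Proof. apply (pe_by_invrel _ _ _ geqb_ok rG [yL] [xL;xL] _ _ rG_in); reflexivity. Qed.
Lemma Gc : pres_eq RG [yL;yL;yL] [xL';xL'].
Proof. apply (pe_by_rel _ _ _ geqb_ok rG [xL';xL'] [] _ _ rG_in); reflexivity. Qed.
Lemma Ge : pres_eq RG [yL'] [xL;xL;yL;yL].
Proof. apply pe_sym, (pe_by_rel _ _ _ geqb_ok rG [] [yL'] _ _ rG_in); reflexivity. Qed.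

Lemma comm_x_p : pres_eq RG ([xL] ++ [xL;xL]) ([xL;xL] ++ [xL]). Proof. apply pe_refl. Qed.
Lemma comm_x_q : pres_eq RG ([xL] ++ [xL';xL']) ([xL';xL'] ++ [xL]). Proof. apply peG_fr; reflexivity. Qed.
Lemma comm_y_p : pres_eq RG ([yL] ++ [xL;xL]) ([xL;xL] ++ [yL]).
Proof. eapply pe_trans. apply pe_sym, Gb. apply pe_sym, Ga. Qed.
Lemma comm_y_q : pres_eq RG ([yL] ++ [xL';xL']) ([xL';xL'] ++ [yL]).
Proof.
  eapply pe_trans. apply (pe_app _ _ [yL] [yL]). apply pe_refl. apply pe_sym, Gc.
  apply (pe_app _ _ [yL;yL;yL] [xL';xL'] [yL] [yL]). apply Gc. apply pe_refl.
Qed.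

Lemma comm_crep {A} (R : list (word A)) l p m :
  pres_eq R ([l] ++ p) (p ++ [l]) -> pres_eq R (l :: crep p m) (crep p m ++ [l]).
Proof.
  intros H; induction m; simpl. apply pe_refl.
  change (l :: crep p (S m)) with (([l] ++ p) ++ crep p m).
  eapply pe_trans. apply pe_app. apply H. apply pe_refl.
  rewrite crep_S, <- app_assoc, <- app_assoc. apply pe_app. apply pe_refl. exact IHm.
Qed.

Definition zw (k : Z) : word Ggen := gpow [xL;xL] [xL';xL'] k.

Lemma central l k : l = xL \/ l = yL -> pres_eq RG (l :: zw k) (zw k ++ [l]).
Proof.
  intros Hl. unfold zw, gpow. destruct (0 <=? k); apply comm_crep;
  destruct Hl; subst; auto using comm_x_p, comm_x_q, comm_y_p, comm_y_q.
Qed.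

Lemma pq : pres_eq RG ([xL;xL] ++ [xL';xL']) []. Proof. apply peG_fr; reflexivity. Qed.
Lemma qp : pres_eq RG ([xL';xL'] ++ [xL;xL]) []. Proof. apply peG_fr; reflexivity. Qed.
Lemma zL1 k : pres_eq RG ([xL;xL] ++ zw k) (zw (k+1)). Proof. apply gpow_L1; first [apply pq|apply qp]. Qed.
Lemma zL2 k : pres_eq RG (zw k ++ [xL;xL]) (zw (k+1)). Proof. apply gpow_L2; first [apply pq|apply qp]. Qed.
Lemma zL3 k : pres_eq RG ([xL';xL'] ++ zw k) (zw (k-1)). Proof. apply gpow_L3; first [apply pq|apply qp]. Qed.
Lemma zL4 k : pres_eq RG (zw k ++ [xL';xL']) (zw (k-1)). Proof. apply gpow_L4; first [apply pq|apply qp]. Qed.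

Inductive syl := SX | SY1 | SY2.
Definition sylw (a : syl) : word Ggen :=
  match a with SX => [xL] | SY1 => [yL] | SY2 => [yL;yL] end.
Definition sw (s : list syl) : word Ggen := concat (map sylw s).
Definition SG := (Z * list syl)%type.
Definition nfG (m : SG) : word Ggen := zw (fst m) ++ sw (snd m).

Definition actx (m : SG) : SG :=
  match m with (k, SX :: r) => (k+1, r) | (k, s) => (k, SX :: s) end.
Definition acty (m : SG) : SG :=
  match m with (k, SY1 :: r) => (k, SY2 :: r) | (k, SY2 :: r) => (k-1, r) | (k, s) => (k, SY1 :: s) end.
Definition actG (l : letter Ggen) (m : SG) : SG :=
  match l with
  | (gx, false) => actx m
  | (gx, true) => let (k, r) := actx m in (k-1, r)
  | (gy, false) => acty m
  | (gy, true) => let (k, r) := acty (acty m) in (k+1, r)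
  end.
Definition evalG (u : word Ggen) : SG := fold_right actG (0, []) u.

Lemma prep l k s : l = xL \/ l = yL -> pres_eq RG (l :: nfG (k, s)) (zw k ++ l :: sw s).
Proof.
  intros Hl. unfold nfG; simpl. change (l :: zw k ++ sw s) with (([l] ++ zw k) ++ sw s).
  replace (zw k ++ l :: sw s) with ((zw k ++ [l]) ++ sw s) by (rewrite <- app_assoc; reflexivity).
  apply pe_app. apply central; auto. apply pe_refl.
Qed.

Lemma stepx m : pres_eq RG (xL :: nfG m) (nfG (actx m)).
Proof.
  destruct m as [k s]. eapply pe_trans. apply prep; auto.
  destruct s as [|[] r]; simpl; try apply pe_refl.
  unfold nfG; simpl. change (sw (SX :: r)) with (xL :: sw r).
  replace (zw k ++ xL :: xL :: sw r) with ((zw k ++ [xL;xL]) ++ sw r)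
    by (rewrite <- app_assoc; reflexivity).
  apply (pe_app _ _ (zw k ++ [xL;xL]) (zw (k+1))). apply zL2. apply pe_refl.
Qed.

Lemma stepy m : pres_eq RG (yL :: nfG m) (nfG (acty m)).
Proof.
  destruct m as [k s]. eapply pe_trans. apply prep; auto.
  destruct s as [|[] r]; simpl; try apply pe_refl.
  unfold nfG; simpl. change (sw (SY2 :: r)) with (yL :: yL :: sw r).
  replace (zw k ++ yL :: yL :: yL :: sw r) with ((zw k ++ [yL;yL;yL]) ++ sw r)
    by (rewrite <- app_assoc; reflexivity).
  apply (pe_app _ _ (zw k ++ [yL;yL;yL]) (zw (k-1))). eapply pe_trans. apply pe_app. apply pe_refl. apply Gc. apply zL4. apply pe_refl.
Qed.

Lemma stepG l m : pres_eq RG (l :: nfG m) (nfG (actG l m)).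
Proof.
  destruct l as [[] []]; simpl.
  -
    pose proof (stepx m) as H. destruct (actx m) as [k r] eqn:E.
    apply pe_trans with ([xL';xL'] ++ xL :: nfG m).
    + apply (pe_app _ _ [xL'] [xL';xL';xL]). apply peG_fr; reflexivity. apply pe_refl.
    + eapply pe_trans. apply pe_app. apply pe_refl. exact H.
      unfold nfG; cbn [fst snd]. rewrite app_assoc. apply (pe_app _ _ ([xL';xL'] ++ zw k) (zw (k-1))). apply zL3. apply pe_refl.
  - apply stepx.
  - pose proof (stepy m) as H1. pose proof (stepy (acty m)) as H2.
    destruct (acty (acty m)) as [k r] eqn:E.
    apply pe_trans with ([xL;xL] ++ yL :: yL :: nfG m).
    + apply (pe_app _ _ [yL'] [xL;xL;yL;yL]). apply Ge. apply pe_refl.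
    + eapply pe_trans. apply pe_app. apply pe_refl. apply pe_cons. exact H1.
      eapply pe_trans. apply pe_app. apply pe_refl. exact H2.
      unfold nfG; cbn [fst snd]. rewrite app_assoc. apply (pe_app _ _ ([xL;xL] ++ zw k) (zw (k+1))). apply zL1. apply pe_refl.
  - apply stepy.
Qed.

Lemma peG_nf u : pres_eq RG u (nfG (evalG u)).
Proof.
  induction u as [|l u IH]. apply pe_refl.
  eapply pe_trans. apply pe_cons, IH. apply stepG.
Qed.

Fixpoint valid (s : list syl) : Prop :=
  match s with
  | [] => True
  | SX :: r => valid r /\ match r with SX :: _ => False | _ => True end
  | _ :: r => valid r /\ match r with SX :: _ => True | [] => True | _ => False end
  end.

Lemma actx_valid m : valid (snd m) -> valid (snd (actx m)).
Proof. destruct m as [k [|[] r]]; simpl; tauto. Qed.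
Lemma acty_valid m : valid (snd m) -> valid (snd (acty m)).
Proof. destruct m as [k [|[] r]]; simpl; try tauto; destruct r as [|[] r']; simpl in *; tauto. Qed.

Lemma actG_valid l m : valid (snd m) -> valid (snd (actG l m)).
Proof.
  intros H. destruct l as [[] []].
  - pose proof (actx_valid m H). unfold actG. destruct (actx m); auto.
  - apply actx_valid; auto.
  - pose proof (acty_valid _ (acty_valid m H)). unfold actG. destruct (acty (acty m)); auto.
  - apply acty_valid; auto.
Qed.

Lemma evalG_valid u : valid (snd (evalG u)).
Proof. induction u; simpl; auto. apply actG_valid; auto. Qed.
Import ListNotations.
Open Scope Z_scope.

Definition Phi (w : word Ggen) : word G1gen := subst psiCG1 (subst phiGC w).
Lemma Phi_app u v : Phi (u ++ v) = Phi u ++ Phi v.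
Proof. unfold Phi; rewrite !subst_app; auto. Qed.
Definition E (s : list syl) : St := eval1 (Phi (sw s)).
Definition a0 : letter Aidx := (i0, false).

Lemma E_X r : E (SX :: r) = (fst (E r) - 3, cr (spow (fst (E r) - 3) a0) (snd (E r))).
Proof.
  unfold E. change (sw (SX::r)) with ([xL] ++ sw r). rewrite Phi_app, eval1_app.
  destruct (eval1 (Phi (sw r))) as [n w]. simpl. replace (n-1-1-1) with (n-3) by lia. reflexivity.
Qed.
Lemma E_Y1 r : E (SY1 :: r) = (fst (E r) + 2, snd (E r)).
Proof.
  unfold E. change (sw (SY1::r)) with ([yL] ++ sw r). rewrite Phi_app, eval1_app.
  destruct (eval1 (Phi (sw r))) as [n w]. simpl. f_equal; lia.
Qed.
Lemma E_Y2 r : E (SY2 :: r) = (fst (E r) + 4, snd (E r)).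
Proof.
  unfold E. change (sw (SY2::r)) with ([yL;yL] ++ sw r). rewrite Phi_app, eval1_app.
  destruct (eval1 (Phi (sw r))) as [n w]. simpl. f_equal; lia.
Qed.
Lemma E_nil : E [] = (0, []). Proof. reflexivity. Qed.
Lemma E_ok s : redb (snd (E s)) = true. Proof. apply eval1_ok. Qed.

Definition headP (s : list syl) (n : Z) (w : word Aidx) : Prop :=
  match s with
  | [] => w = [] /\ n = 0
  | [SY1] => w = [] /\ n = 2
  | [SY2] => w = [] /\ n = 4
  | SX :: _ => exists w', w = spow n a0 :: w'
  | SY1 :: _ => exists w', w = spow (n-2) a0 :: w'
  | SY2 :: _ => exists w', w = spow (n-4) a0 :: w'
  end.

Lemma spow_mod a b c : a mod 6 = b mod 6 -> spow a c = spow b c.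
Proof. unfold spow; intros H; rewrite H; auto. Qed.

Lemma nc_aux h t l : redb (h :: t) = true -> h <> inv_letter l -> redb (l :: h :: t) = true.
Proof.
  intros H1 H2. simpl. apply andb_true_intro; split; auto.
  destruct (aeqb h (inv_letter l)) eqn:E; auto. apply aeqb_true in E; congruence.
Qed.

Lemma nc r : valid (SX :: r) -> headP r (fst (E r)) (snd (E r)) ->
  redb (spow (fst (E r) - 3) a0 :: snd (E r)) = true.
Proof.
  intros Hv Hh. pose proof (E_ok r) as Hr.
  destruct (E r) as [n w]; simpl in *.
  destruct r as [|[] r']; simpl in Hv.
  - destruct Hh as [-> _]; reflexivity.
  - tauto.
  - destruct r' as [|a r''].
    + destruct Hh as [-> _]; reflexivity.
    + destruct Hh as [w' ->]. apply nc_aux; auto. rewrite inv_spow3. intros Heq.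
      apply spow_eq_mod in Heq. Z.div_mod_to_equations; lia.
  - destruct r' as [|a r''].
    + destruct Hh as [-> _]; reflexivity.
    + destruct Hh as [w' ->]. apply nc_aux; auto. rewrite inv_spow3. intros Heq.
      apply spow_eq_mod in Heq. Z.div_mod_to_equations; lia.
Qed.

Lemma Inv s : valid s -> headP s (fst (E s)) (snd (E s)).
Proof.
  induction s as [|a r IH]; intros Hv.
  - simpl; auto.
  - destruct a.
    + rewrite E_X. simpl. pose proof (nc r Hv (IH (proj1 Hv))) as H.
      rewrite cr_cons by auto. eauto.
    + rewrite E_Y1. simpl in Hv. destruct Hv as [Hv1 Hv2]. specialize (IH Hv1).
      destruct r as [|[] r']; simpl in *; try tauto.
      * destruct IH as [w' H]. exists w'. rewrite H. repeat f_equal; lia.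
    + rewrite E_Y2. simpl in Hv. destruct Hv as [Hv1 Hv2]. specialize (IH Hv1).
      destruct r as [|[] r']; simpl in *; try tauto.
      * destruct IH as [w' H]. exists w'. rewrite H. repeat f_equal; lia.
Qed.

Lemma E_X' r : valid (SX :: r) -> E (SX :: r) = (fst (E r) - 3, spow (fst (E r) - 3) a0 :: snd (E r)).
Proof.
  intros Hv. rewrite E_X, cr_cons; auto. apply nc; auto. apply Inv. apply Hv.
Qed.

Definition T (k : Z) (s : list syl) : St := (fst (E s) - 6 * k, snd (E s)).

Fixpoint D (N : Z) (w : word Aidx) : SG :=
  match w with
  | [] => if N mod 6 =? 0 then (-(N/6), []) else if N mod 6 =? 2 then (-((N-2)/6), [SY1])
          else (-((N-4)/6), [SY2])
  | h :: w' => if aeqb h (spow N a0) then let (k, r) := D (N+3) w' in (k, SX :: r)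
     else if aeqb h (spow (N-2) a0) then let (k, r) := D (N+1) w' in (k, SY1 :: SX :: r)
     else let (k, r) := D (N-1) w' in (k, SY2 :: SX :: r)
  end.

Lemma aeqb_spow_t a b c : a mod 6 = b mod 6 -> aeqb (spow a c) (spow b c) = true.
Proof. intros H; rewrite (spow_mod a b c H); apply aeqb_refl. Qed.
Lemma aeqb_spow_f a b c : a mod 6 <> b mod 6 -> aeqb (spow a c) (spow b c) = false.
Proof.
  intros H. destruct (aeqb (spow a c) (spow b c)) eqn:E'; auto.
  apply aeqb_true, spow_eq_mod in E'. congruence.
Qed.

Ltac zl := Z.div_mod_to_equations; lia.

Lemma D0 N : N mod 6 = 0 -> D N [] = (-(N/6), []).
Proof. intros H; cbn [D]; rewrite H; reflexivity. Qed.
Lemma D2 N : N mod 6 = 2 -> D N [] = (-((N-2)/6), [SY1]).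
Proof. intros H; cbn [D]; rewrite H; reflexivity. Qed.
Lemma D4 N : N mod 6 = 4 -> D N [] = (-((N-4)/6), [SY2]).
Proof. intros H; cbn [D]; rewrite H; reflexivity. Qed.

Lemma D_T n : forall s k, (length s <= n)%nat -> valid s -> D (fst (T k s)) (snd (T k s)) = (k, s).
Proof.
  induction n as [|n IH]; intros s k Hl Hv.
  - destruct s; simpl in Hl; [|lia]. unfold T. rewrite E_nil.
    cbn [fst snd]. rewrite D0 by zl. f_equal. zl.
  - destruct s as [|a r].
    + unfold T. rewrite E_nil.
      cbn [fst snd]. rewrite D0 by zl. f_equal. zl.
    + simpl in Hl. destruct a.
      * unfold T. rewrite E_X' by auto. cbn [fst snd D].
        rewrite aeqb_spow_t by zl.
        replace (fst (E r) - 3 - 6 * k + 3) with (fst (T k r)) by (unfold T; simpl; lia).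
        change (snd (E r)) with (snd (T k r)).
        rewrite IH by (simpl in Hv; tauto || lia). auto.
      * simpl in Hv. destruct Hv as [Hv1 Hv2]. destruct r as [|[] r']; try tauto.
        -- unfold T. change (E [SY1]) with (2, @nil (letter Aidx)).
           cbn [fst snd]. rewrite D2 by zl. f_equal. zl.
        -- unfold T. rewrite E_Y1, E_X' by auto. cbn [fst snd D].
           rewrite aeqb_spow_f by zl. rewrite aeqb_spow_t by zl.
           replace (fst (E r') - 3 + 2 - 6 * k + 1) with (fst (T k r')) by (unfold T; simpl; lia).
           change (snd (E r')) with (snd (T k r')).
           rewrite IH by (simpl in Hv1; simpl in Hl; tauto || lia). auto.
      * simpl in Hv. destruct Hv as [Hv1 Hv2]. destruct r as [|[] r']; try tauto.
        -- unfold T. change (E [SY2]) with (4, @nil (letter Aidx)).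
           cbn [fst snd]. rewrite D4 by zl. f_equal. zl.
        -- unfold T. rewrite E_Y2, E_X' by auto. cbn [fst snd D].
           rewrite aeqb_spow_f by zl. rewrite aeqb_spow_f by zl.
           replace (fst (E r') - 3 + 4 - 6 * k - 1) with (fst (T k r')) by (unfold T; simpl; lia).
           change (snd (E r')) with (snd (T k r')).
           rewrite IH by (simpl in Hv1; simpl in Hl; tauto || lia). auto.
Qed.

Lemma T_inj k1 k2 s1 s2 : valid s1 -> valid s2 -> T k1 s1 = T k2 s2 -> (k1, s1) = (k2, s2).
Proof.
  intros H1 H2 H. pose proof (D_T _ s1 k1 (le_n _) H1) as E1. pose proof (D_T _ s2 k2 (le_n _) H2) as E2.
  rewrite H in E1. congruence.
Qed.

Lemma actw_app u v m : actw (u ++ v) m = actw u (actw v m).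
Proof. unfold actw; rewrite fold_right_app; auto. Qed.

Lemma Phi_crep p m : Phi (crep p m) = crep (Phi p) m.
Proof. induction m; auto. rewrite !crep_S, Phi_app, IHm; auto. Qed.

Lemma act_xx n w : redb w = true -> actw (Phi [xL;xL]) (n, w) = (n - 6, w).
Proof.
  intros H. cbn. f_equal. lia.
  set (m := n - 1 - 1 - 1 - 1 - 1 - 1).
  replace (n - 1 - 1 - 1) with (m + 3) by (unfold m; lia).
  rewrite <- (inv_spow3 (m+3)). replace (m + 3 - 3) with m by lia.
  apply cr_cancel; auto.
Qed.
Lemma act_xx' n w : redb w = true -> actw (Phi [xL';xL']) (n, w) = (n + 6, w).
Proof.
  intros H. cbn. f_equal. lia.
  replace (n + 1 + 1 + 1) with (n + 3) by lia.
  rewrite <- (inv_spow3 (n+3)). replace (n + 3 - 3) with n by lia.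
  apply cr_cancel'; auto.
Qed.

Lemma act_zw k n w : redb w = true -> actw (Phi (zw k)) (n, w) = (n - 6 * k, w).
Proof.
  intros H. unfold zw. destruct (Zcases k) as [m [-> | ->]].
  - rewrite gpow_pos, Phi_crep. induction m.
    + simpl. f_equal; lia.
    + rewrite crep_S, actw_app, IHm, act_xx by auto. f_equal; lia.
  - rewrite gpow_neg, Phi_crep. generalize (S m) as m'. induction m'.
    + simpl. f_equal; lia.
    + rewrite crep_S, actw_app, IHm', act_xx' by auto. f_equal; lia.
Qed.

Lemma eval_Phi_nfG m : eval1 (Phi (nfG m)) = T (fst m) (snd m).
Proof.
  destruct m as [k s]. unfold nfG, T. cbn [fst snd]. rewrite Phi_app, eval1_app.
  fold (E s). pose proof (E_ok s). destruct (E s) as [n w]. apply act_zw; auto.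
Qed.

Lemma phi_inj : hom_inj RG RC phiGC.
Proof.
  intros u v H. apply psi_wd in H.
  assert (Hu : pres_eq RG1 (Phi u) (Phi (nfG (evalG u)))).
  { apply psi_wd, phi_wd, peG_nf. }
  assert (Hv : pres_eq RG1 (Phi v) (Phi (nfG (evalG v)))).
  { apply psi_wd, phi_wd, peG_nf. }
  apply eval1_pe in H, Hu, Hv. unfold Phi in *. 
  assert (Heq : T (fst (evalG u)) (snd (evalG u)) = T (fst (evalG v)) (snd (evalG v))).
  { rewrite <- !eval_Phi_nfG. unfold Phi. congruence. }
  apply T_inj in Heq; try apply evalG_valid.
  eapply pe_trans. apply peG_nf. 
  replace (evalG u) with (evalG v). apply pe_sym, peG_nf.
  destruct (evalG u), (evalG v). simpl in Heq. congruence.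
Qed.

Close Scope Z_scope.

Theorem mainTheorem4 :
  (* x |-> a b^-3, y |-> b^2 defines an embedding G -> C *)
  (hom_wd RG RC phiGC /\ hom_inj RG RC phiGC) /\
  (* a |-> a_0, b |-> b defines an isomorphism C -> G1 *)
  (hom_wd RC RG1 psiCG1 /\ hom_inj RC RG1 psiCG1 /\ hom_surj RC RG1 psiCG1) /\
  (* normal forms in G1: existence *)
  (forall w : word G1gen, exists (n : Z) (s : word Aidx),
      reduced s /\ pres_eq RG1 w (normal_form n s)) /\
  (* normal forms in G1: uniqueness *)
  (forall (n n' : Z) (s s' : word Aidx), reduced s -> reduced s' ->
      pres_eq RG1 (normal_form n s) (normal_form n' s') -> n = n' /\ s = s').
Proof.
  split; [split; [apply phi_wd | apply phi_inj]|].
  split; [split; [apply psi_wd | split; [apply psi_inj | apply psi_surj]]|].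
  split. apply G1_exist. apply G1_unique.
Qed.
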